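(* Let $\mathcal Q$ be a quantaloid and $\Phi:\mathcal E\to\mathcal D$ a $\mathcal Q$-distributor. A $\mathcal Q$-category $\mathcal C$ is equivalent to the Isbell $\mathcal Q$-category $\mathsf I\Phi$ if and only if $\mathcal C$ is total and there are $\mathcal Q$-functors $F:\mathcal E\to\mathcal C$ and $G:\mathcal D\to\mathcal C$ such that (1) $\Phi(X,Y)=\mathcal C(FX,GY)$ for all $X\in\mathrm{ob}\,\mathcal E$, $Y\in\mathrm{ob}\,\mathcal D$; (2) $F$ is dense; (3) $G$ is codense.
   Context: A quantaloid is a category whose hom-sets are complete lattices with composition preserving joins in each variable; $v\le w\swarrow u\iff v\circ u\le w$ and $u\le v\searrow w\iff v\circ u\le w$. A $\mathcal Q$-category: objects with extents $|X|$ and arrows $\mathcal E(X,Y):|X|\to|Y|$ with $1_{|X|}\le\mathcal E(X,X)$, $\mathcal E(Y,Z)\circ\mathcal E(X,Y)\le\mathcal E(X,Z)$; $\mathcal Q$-functors: $|FX|=|X|$, $\mathcal E(X,Y)\le\mathcal C(FX,FY)$. $X\cong Y$ iff $|X|=|Y|$, $1\le\mathcal C(X,Y)$, $1\le\mathcal C(Y,X)$; an equivalence is a $\mathcal Q$-functor that is fully faithful and surjective up to isomorphism. Presheaves of extent $T$: $\varphi_X:|X|\to T$ with $\varphi_X\circ\mathcal E(X',X)\le\varphi_{X'}$, forming $\mathsf P\mathcal E$ with $\mathsf P\mathcal E(\varphi,\psi)=\bigwedge_X\psi_X\swarrow\varphi_X$; covariant presheaves of extent $T$: $\psi_Y:T\to|Y|$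 with $\mathcal D(Y,Y')\circ\psi_Y\le\psi_{Y'}$, forming $\mathsf P^\dagger\mathcal D$ with $\mathsf P^\dagger\mathcal D(\psi,\psi')=\bigwedge_Y\psi'_Y\searrow\psi_Y$. $\mathcal C$ is total if the Yoneda functor $Z\mapsto\mathcal C(-,Z)$ has a left adjoint ($F\dashv G$ iff $\mathcal C(FX,Y)=\mathcal E(X,GY)$). For $\varphi\in\mathsf P\mathcal E$, the weighted colimit $\varphi\star F$ is an object $Z$ with $|Z|=|\varphi|$ and $\mathcal C(Z,W)=\bigwedge_X\mathcal C(FX,W)\swarrow\varphi_X$ for all $W$; $F$ is dense if every object of $\mathcal C$ is isomorphic to $\varphi\star F$ for some $\varphi$. For a covariant presheaf $\psi$ on $\mathcal D$ of extent $T$, the weighted limit of $G$ by $\psi$ is $Z$ with $|Z|=T$ and $\mathcal C(W,Z)=\bigwedge_Y\psi_Y\searrow\mathcal C(W,GY)$ for all $W$; $G$ is codense if every object of $\mathcal C$ is isomorphic to such a weighted limit. A $\mathcal Q$-distributor $\Phi:\mathcal E\to\mathcal D$ is a family $\Phi(X,Y):|X|\to|Y|$ with $\mathcal D(Y,Y')\circ\Phi(X,Y)\circ\mathcal E(X',X)\le\Phi(X',Y')$; $\Phi_\uparrow:\mathsf P\mathcal E\to\mathsf P^\dagger\mathcal D$, $(\Phi_\uparrow\varphi)_Y=\bigwedge_X\Phi(X,Y)\swarrow\varphi_X$; $\Phi^\downarrow:\mathsf P^\dagger\mathcal D\to\mathsf P\mathcal E$, $(\Phi^\downarrow\psi)_X=\bigwedge_Y\psi_Y\searrow\Phi(X,Y)$;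 $\mathsf I\Phi$ is the full $\mathcal Q$-subcategory of $\mathsf P\mathcal E$ on those $\varphi$ with $\Phi^\downarrow\Phi_\uparrow\varphi=\varphi$. *)

(* Defs.v *)
From Stdlib Require Import ssreflect.

Set Implicit Arguments.
Unset Strict Implicit.

Record Quantaloid := {
  qob : Type;
  qhom : qob -> qob -> Type;
  qcomp : forall a b c, qhom b c -> qhom a b -> qhom a c;
  qid : forall a, qhom a a;
  qle : forall a b, qhom a b -> qhom a b -> Prop;
  qsup : forall a b, (qhom a b -> Prop) -> qhom a b;
  qcomp_assoc : forall a b c d (h : qhom c d) (g : qhom b c) (f : qhom a b),
      qcomp h (qcomp g f) = qcomp (qcomp h g) f;
  qcomp_id_l : forall a b (f : qhom a b), qcomp (qid b) f = f;
  qcomp_id_r : forall a b (f : qhom a b), qcomp f (qid a) = f;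
  qle_refl : forall a b (f : qhom a b), qle f f;
  qle_trans : forall a b (f g h : qhom a b), qle f g -> qle g h -> qle f h;
  qle_antisym : forall a b (f g : qhom a b), qle f g -> qle g f -> f = g;
  qsup_ub : forall a b (S : qhom a b -> Prop) f, S f -> qle f (qsup S);
  qsup_least : forall a b (S : qhom a b -> Prop) g,
      (forall f, S f -> qle f g) -> qle (qsup S) g;
  qcomp_sup_l : forall a b c (g : qhom b c) (S : qhom a b -> Prop),
      qcomp g (qsup S) = qsup (fun h => exists f, S f /\ h = qcomp g f);
  qcomp_sup_r : forall a b c (S : qhom b c -> Prop) (f : qhom a b),
      qcomp (qsup S) f = qsup (fun h => exists g, S g /\ h = qcomp g f)
}.

Arguments qhom : clear implicits.
Arguments qcomp {q a b c} _ _.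
Arguments qid {q} a.
Arguments qle {q a b} _ _.
Arguments qsup {q a b} _.
Unset Implicit Arguments.

Section QuantaloidOps.
Context {Q : Quantaloid}.

Definition qinf {a b} (S : qhom Q a b -> Prop) : qhom Q a b :=
  qsup (fun x => forall y, S y -> qle x y).
Definition qinfI {I : Type} {a b} (f : I -> qhom Q a b) : qhom Q a b :=
  qinf (fun h => exists i, h = f i).

(* w ↙ u  (for u : a -> b, w : a -> c): the largest v : b -> c with v∘u ≤ w *)
Definition lres {a b c} (w : qhom Q a c) (u : qhom Q a b) : qhom Q b c :=
  qsup (fun v => qle (qcomp v u) w).
(* v ↘ w  (for v : b -> c, w : a -> c): the largest u : a -> b with v∘u ≤ w *)
Definition rres {a b c} (v : qhom Q b c) (w : qhom Q a c) : qhom Q a b :=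
  qsup (fun u => qle (qcomp v u) w).

Definition castH {a a' b b'} (p : a = a') (q : b = b') (f : qhom Q a b)
  : qhom Q a' b' :=
  match p in _ = a1 return qhom Q a1 b' with
  | eq_refl => match q in _ = b1 return qhom Q a b1 with eq_refl => f end
  end.

Lemma comp_mono_l {a b c} (g : qhom Q b c) {f f' : qhom Q a b} :
  qle f f' -> qle (qcomp g f) (qcomp g f').
Proof.
move=> H.
have -> : f' = qsup (fun h => h = f \/ h = f').
  apply: qle_antisym; first by apply: qsup_ub; right.
  by apply: qsup_least => h [->|->] //; apply: qle_refl.
rewrite qcomp_sup_l; apply: qsup_ub; exists f; split=> //; by left.
Qed.

Lemma comp_mono_r {a b c} {g g' : qhom Q b c} (f : qhom Q a b) :
  qle g g' -> qle (qcomp g f) (qcomp g' f).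
Proof.
move=> H.
have -> : g' = qsup (fun h => h = g \/ h = g').
  apply: qle_antisym; first by apply: qsup_ub; right.
  by apply: qsup_least => h [->|->] //; apply: qle_refl.
rewrite qcomp_sup_r; apply: qsup_ub; exists g; split=> //; by left.
Qed.

Lemma lres_spec {a b c} (w : qhom Q a c) (u : qhom Q a b) v :
  qle v (lres w u) <-> qle (qcomp v u) w.
Proof.
split=> H.
- apply: qle_trans (comp_mono_r u H) _.
  rewrite /lres qcomp_sup_r; apply: qsup_least => h [g [Hg ->]] //.
- by apply: qsup_ub.
Qed.

Lemma qinfI_spec {I : Type} {a b} (f : I -> qhom Q a b) x :
  qle x (qinfI f) <-> forall i, qle x (f i).
Proof.
split=> H.
- move=> i; apply: qle_trans H _; apply: qsup_least => y Hy; apply: Hy.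
  by exists i.
- apply: qsup_ub => y [i ->]; exact: H.
Qed.

End QuantaloidOps.

Record QCat (Q : Quantaloid) := {
  cobj : Type;
  cext : cobj -> qob Q;
  chom : forall X Y : cobj, qhom Q (cext X) (cext Y);
  chom_id : forall X, qle (qid (cext X)) (chom X X);
  chom_comp : forall X Y Z, qle (qcomp (chom Y Z) (chom X Y)) (chom X Z)
}.
Arguments cobj {Q} q : rename.
Arguments cext {Q} q _ : rename.
Arguments chom {Q} q _ _ : rename.

Record QFun {Q} (A B : QCat Q) := {
  fobj : cobj A -> cobj B;
  fext : forall X, cext B (fobj X) = cext A X;
  fhom : forall X Y,
      qle (chom A X Y) (castH (fext X) (fext Y) (chom B (fobj X) (fobj Y)))
}.
Arguments fobj {Q A B} _ _.
Arguments fext {Q A B} _ _.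

Section QCatNotions.
Context {Q : Quantaloid}.

Definition qiso (C : QCat Q) (X Y : cobj C) : Prop :=
  exists p : cext C X = cext C Y,
    qle (castH eq_refl p (qid (cext C X))) (chom C X Y) /\
    qle (castH p eq_refl (qid (cext C X))) (chom C Y X).

Definition fully_faithful {A B : QCat Q} (F : QFun A B) : Prop :=
  forall X Y, castH (fext F X) (fext F Y) (chom B (fobj F X) (fobj F Y))
              = chom A X Y.

Definition ess_surjective {A B : QCat Q} (F : QFun A B) : Prop :=
  forall Z : cobj B, exists X, qiso B (fobj F X) Z.

Definition qequivalence {A B : QCat Q} (F : QFun A B) : Prop :=
  fully_faithful F /\ ess_surjective F.

Definition qadjoint {A B : QCat Q} (F : QFun A B) (G : QFun B A) : Prop :=
  forall X Y, castH (fext F X) eq_refl (chom B (fobj F X) Y)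
              = castH eq_refl (fext G Y) (chom A X (fobj G Y)).

Definition FullSub (C : QCat Q) (P : cobj C -> Prop) : QCat Q.
Proof.
refine {| cobj := {X : cobj C | P X};
          cext := fun X => cext C (proj1_sig X);
          chom := fun X Y => chom C (proj1_sig X) (proj1_sig Y) |}.
- move=> X; exact: chom_id.
- move=> X Y Z; exact: chom_comp.
Defined.

Definition is_presheaf (E : QCat Q) {T : qob Q}
  (phi : forall X : cobj E, qhom Q (cext E X) T) : Prop :=
  forall X X', qle (qcomp (phi X) (chom E X' X)) (phi X').

Definition PObj (E : QCat Q) : Type :=
  {T : qob Q & {phi : forall X : cobj E, qhom Q (cext E X) T | is_presheaf E phi}}.
Definition pext {E : QCat Q} (p : PObj E) : qob Q := projT1 p.
Definition pval {E : QCat Q} (p : PObj E) : forall X, qhom Q (cext E X) (pext p) :=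
  proj1_sig (projT2 p).

Definition phom {E : QCat Q} (p q : PObj E) : qhom Q (pext p) (pext q) :=
  qinfI (fun X => lres (pval q X) (pval p X)).

Definition PCat (E : QCat Q) : QCat Q.
Proof.
refine {| cobj := PObj E; cext := @pext E; chom := @phom E |}.
- move=> p; apply/qinfI_spec => X; apply/lres_spec.
  rewrite qcomp_id_l; exact: qle_refl.
- move=> p q r; apply/qinfI_spec => X; apply/lres_spec.
  rewrite -qcomp_assoc.
  have H1 : qle (qcomp (phom p q) (pval p X)) (pval q X).
    apply/lres_spec; move: (qle_refl (phom p q)) => /qinfI_spec; exact.
  have H2 : qle (qcomp (phom q r) (pval q X)) (pval r X).
    apply/lres_spec; move: (qle_refl (phom q r)) => /qinfI_spec; exact.
  exact: qle_trans (comp_mono_l _ H1) H2.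
Defined.

Definition is_copresheaf (D : QCat Q) {T : qob Q}
  (psi : forall Y : cobj D, qhom Q T (cext D Y)) : Prop :=
  forall Y Y', qle (qcomp (chom D Y Y') (psi Y)) (psi Y').

Definition CPObj (D : QCat Q) : Type :=
  {T : qob Q & {psi : forall Y : cobj D, qhom Q T (cext D Y) | is_copresheaf D psi}}.
Definition cpext {D : QCat Q} (p : CPObj D) : qob Q := projT1 p.
Definition cpval {D : QCat Q} (p : CPObj D) : forall Y, qhom Q (cpext p) (cext D Y) :=
  proj1_sig (projT2 p).

Definition yon_obj (C : QCat Q) (Z : cobj C) : PObj C.
Proof.
refine (existT _ (cext C Z) (exist _ (fun X => chom C X Z) _)).
move=> X X'; exact: chom_comp.
Defined.

Definition Yoneda (C : QCat Q) : QFun C (PCat C).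
Proof.
refine (@Build_QFun Q C (PCat C) (yon_obj C) (fun Z => eq_refl) _).
move=> Y Z; simpl; apply/qinfI_spec => X; apply/lres_spec; exact: chom_comp.
Defined.

Definition total (C : QCat Q) : Prop :=
  exists L : QFun (PCat C) C, qadjoint L (Yoneda C).

Definition is_wcolim {E C : QCat Q} (F : QFun E C) (phi : PObj E) (Z : cobj C)
  : Prop :=
  exists p : cext C Z = pext phi,
    forall W : cobj C,
      castH p eq_refl (chom C Z W)
      = qinfI (fun X => lres (castH (fext F X) eq_refl (chom C (fobj F X) W))
                             (pval phi X)).

Definition dense {E C : QCat Q} (F : QFun E C) : Prop :=
  forall Z : cobj C, exists (phi : PObj E) (Z' : cobj C),
    is_wcolim F phi Z' /\ qiso C Z Z'.

Definition is_wlim {D C : QCat Q} (G : QFun D C) (psi : CPObj D) (Z : cobj C)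
  : Prop :=
  exists p : cext C Z = cpext psi,
    forall W : cobj C,
      castH eq_refl p (chom C W Z)
      = qinfI (fun Y => rres (cpval psi Y)
                             (castH eq_refl (fext G Y) (chom C W (fobj G Y)))).

Definition codense {D C : QCat Q} (G : QFun D C) : Prop :=
  forall Z : cobj C, exists (psi : CPObj D) (Z' : cobj C),
    is_wlim G psi Z' /\ qiso C Z Z'.

Record QDist (E D : QCat Q) := {
  dmap : forall (X : cobj E) (Y : cobj D), qhom Q (cext E X) (cext D Y);
  dmap_ax : forall X X' Y Y',
      qle (qcomp (chom D Y Y') (qcomp (dmap X Y) (chom E X' X))) (dmap X' Y')
}.
Arguments dmap {E D} _ _ _.

Definition dist_up {E D : QCat Q} (Phi : QDist E D) {T : qob Q}
  (phi : forall X : cobj E, qhom Q (cext E X) T) : forall Y : cobj D, qhom Q T (cext D Y) :=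
  fun Y => qinfI (fun X => lres (dmap Phi X Y) (phi X)).

Definition dist_down {E D : QCat Q} (Phi : QDist E D) {T : qob Q}
  (psi : forall Y : cobj D, qhom Q T (cext D Y)) : forall X : cobj E, qhom Q (cext E X) T :=
  fun X => qinfI (fun Y => rres (psi Y) (dmap Phi X Y)).

Definition Isbell {E D : QCat Q} (Phi : QDist E D) : QCat Q :=
  FullSub (PCat E)
    (fun p => forall X, dist_down Phi (dist_up Phi (pval p)) X = pval p X).

End QCatNotions.
Arguments dmap {Q E D} _ _ _.

(* Main.v *)
Require Import Defs.
From Stdlib Require Import ssreflect ProofIrrelevance FunctionalExtensionality IndefiniteDescription.

Section Gen.
Context {Q : Quantaloid}.

Lemma castH_irr {a a' b b' : qob Q} (p p' : a = a') (q q' : b = b') (f : qhom Q a b) :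
  castH p q f = castH p' q' f.
Proof. by rewrite (proof_irrelevance _ p p') (proof_irrelevance _ q q'). Qed.

Lemma castH_refl {a b : qob Q} (p : a = a) (q : b = b) f : castH p q f = f.
Proof. by rewrite (castH_irr p eq_refl q eq_refl). Qed.

Lemma castHH {a a' a'' b b' b'' : qob Q} (p : a = a') (q : b = b') (p' : a' = a'') (q' : b' = b'') pp qq f :
  castH p' q' (castH p q f) = castH pp qq f.
Proof. destruct p', q', p, q; by rewrite (castH_refl pp qq). Qed.

Lemma castH_sym {a a' b b' : qob Q} (p : a = a') (q : b = b') f :
  castH (eq_sym p) (eq_sym q) (castH p q f) = f.
Proof. by destruct p, q. Qed.

Lemma castH_eq {a a' b b' : qob Q} (p : a = a') (q : b = b') f g :
  castH p q f = g <-> f = castH (eq_sym p) (eq_sym q) g.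
Proof. by destruct p, q. Qed.

Lemma castH_comp {a a' b b' c c' : qob Q} (p : a = a') (q : b = b') (r : c = c')
  (g : qhom Q b c) (f : qhom Q a b) :
  castH p r (qcomp g f) = qcomp (castH q r g) (castH p q f).
Proof. by destruct p, q, r. Qed.

Lemma castH_comp_l {a a' b c : qob Q} (p : a = a') (g : qhom Q b c) (f : qhom Q a b) :
  castH p eq_refl (qcomp g f) = qcomp g (castH p eq_refl f).
Proof. by destruct p. Qed.

Lemma castH_comp_r {a b c c' : qob Q} (r : c = c') (g : qhom Q b c) (f : qhom Q a b) :
  castH eq_refl r (qcomp g f) = qcomp (castH eq_refl r g) f.
Proof. by destruct r. Qed.

Lemma castH_le {a a' b b' : qob Q} (p : a = a') (q : b = b') f g :
  qle f g -> qle (castH p q f) (castH p q g).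
Proof. by destruct p, q. Qed.

Lemma castH_le_iff {a a' b b' : qob Q} (p : a = a') (q : b = b') f g :
  qle (castH p q f) (castH p q g) <-> qle f g.
Proof. by destruct p, q. Qed.

Lemma castH_id {a a' : qob Q} (p : a = a') (p' : a = a') : castH p p' (qid a) = qid a'.
Proof. destruct p; by rewrite castH_refl. Qed.

Lemma castH_lres {a a' b b' c c' : qob Q} (p : a = a') (q : b = b') (r : c = c')
  (w : qhom Q a c) (u : qhom Q a b) :
  castH q r (lres w u) = lres (castH p r w) (castH p q u).
Proof. by destruct p, q, r. Qed.

Lemma castH_rres {a a' b b' c c' : qob Q} (p : a = a') (q : b = b') (r : c = c')
  (v : qhom Q b c) (w : qhom Q a c) :
  castH p q (rres v w) = rres (castH q r v) (castH p r w).
Proof. by destruct p, q, r. Qed.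

Lemma castH_qinfI {I : Type} {a a' b b' : qob Q} (p : a = a') (q : b = b') (f : I -> qhom Q a b) :
  castH p q (qinfI f) = qinfI (fun i => castH p q (f i)).
Proof. by destruct p, q. Qed.

Lemma cid_r {a a' c : qob Q} (p : a = a') (g : qhom Q a' c) :
  qcomp g (castH eq_refl p (qid a)) = castH (eq_sym p) eq_refl g.
Proof. destruct p; by rewrite qcomp_id_r. Qed.

Lemma cid_r' {a a' c : qob Q} (p : a = a') (g : qhom Q a c) :
  qcomp g (castH p eq_refl (qid a)) = castH p eq_refl g.
Proof. destruct p; by rewrite qcomp_id_r. Qed.

Lemma cid_l {a a' c : qob Q} (p : a = a') (g : qhom Q c a) :
  qcomp (castH eq_refl p (qid a)) g = castH eq_refl p g.
Proof. destruct p; by rewrite qcomp_id_l. Qed.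

Lemma cid_l' {a a' c : qob Q} (p : a = a') (g : qhom Q c a') :
  qcomp (castH p eq_refl (qid a)) g = castH eq_refl (eq_sym p) g.
Proof. destruct p; by rewrite qcomp_id_l. Qed.

Lemma eq_by_lower {a b : qob Q} (x y : qhom Q a b) :
  (forall z, qle z x <-> qle z y) -> x = y.
Proof.
move=> H; apply: qle_antisym.
- by apply/H; apply: qle_refl.
- by apply/H; apply: qle_refl.
Qed.

Lemma rres_spec {a b c : qob Q} (v : qhom Q b c) (w : qhom Q a c) u :
  qle u (rres v w) <-> qle (qcomp v u) w.
Proof.
split=> H.
- apply: qle_trans (comp_mono_l v H) _.
  rewrite /rres qcomp_sup_l; apply: qsup_least => h [g [Hg ->]] //.
- by apply: qsup_ub.
Qed.

Lemma qinfI_lb {I : Type} {a b : qob Q} (f : I -> qhom Q a b) i : qle (qinfI f) (f i).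
Proof. move: (qle_refl (qinfI f)) => /qinfI_spec; exact. Qed.

Lemma lres_comp {a b c : qob Q} (w : qhom Q a c) (u : qhom Q a b) : qle (qcomp (lres w u) u) w.
Proof. apply/lres_spec; exact: qle_refl. Qed.

Lemma rres_comp {a b c : qob Q} (v : qhom Q b c) (w : qhom Q a c) : qle (qcomp v (rres v w)) w.
Proof. apply/rres_spec; exact: qle_refl. Qed.

Lemma lres_anti {a b c : qob Q} (w : qhom Q a c) (u u' : qhom Q a b) :
  qle u u' -> qle (lres w u') (lres w u).
Proof. move=> H; apply/lres_spec; exact: qle_trans (comp_mono_l _ H) (lres_comp _ _). Qed.

Lemma lres_mono {a b c : qob Q} (w w' : qhom Q a c) (u : qhom Q a b) :
  qle w w' -> qle (lres w u) (lres w' u).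
Proof. move=> H; apply/lres_spec; exact: qle_trans (lres_comp _ _) H. Qed.

Lemma rres_anti {a b c : qob Q} (v v' : qhom Q b c) (w : qhom Q a c) :
  qle v v' -> qle (rres v' w) (rres v w).
Proof. move=> H; apply/rres_spec; exact: qle_trans (comp_mono_r _ H) (rres_comp _ _). Qed.

Lemma rres_mono {a b c : qob Q} (v : qhom Q b c) (w w' : qhom Q a c) :
  qle w w' -> qle (rres v w) (rres v w').
Proof. move=> H; apply/rres_spec; exact: qle_trans (rres_comp _ _) H. Qed.

Lemma qinfI_mono {I : Type} {a b : qob Q} (f g : I -> qhom Q a b) :
  (forall i, qle (f i) (g i)) -> qle (qinfI f) (qinfI g).
Proof. move=> H; apply/qinfI_spec => i; exact: qle_trans (qinfI_lb f i) (H i). Qed.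

Lemma qinfI_ext {I : Type} {a b : qob Q} (f g : I -> qhom Q a b) :
  (forall i, f i = g i) -> qinfI f = qinfI g.
Proof. by move=> H; rewrite (functional_extensionality f g H). Qed.

Lemma comp_mono {a b c : qob Q} (g g' : qhom Q b c) (f f' : qhom Q a b) :
  qle g g' -> qle f f' -> qle (qcomp g f) (qcomp g' f').
Proof. move=> H1 H2; exact: qle_trans (comp_mono_l g H2) (comp_mono_r f' H1). Qed.

Lemma iso_hom (K : QCat Q) (A B : cobj K) (q : cext K A = cext K B) :
  qiso K A B ->
  (forall W, chom K A W = castH (eq_sym q) eq_refl (chom K B W)) /\
  (forall W, chom K W A = castH eq_refl (eq_sym q) (chom K W B)).
Proof.
case=> p [h1 h2]; rewrite (proof_irrelevance _ q p); clear q.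
split=> W.
- apply: qle_antisym.
  + rewrite -(castH_sym p eq_refl (chom K A W)); apply: castH_le.
    apply: qle_trans (chom_comp _ _ _ _ _); rewrite -cid_r'; exact: comp_mono_l.
  + apply: qle_trans (chom_comp _ _ _ _ _); rewrite -cid_r; exact: comp_mono_l.
- apply: qle_antisym.
  + rewrite -(castH_sym eq_refl p (chom K W A)); apply: castH_le.
    apply: qle_trans (chom_comp _ _ _ _ _); rewrite -cid_l; exact: comp_mono_r.
  + apply: qle_trans (chom_comp _ _ _ _ _); rewrite -cid_l'; exact: comp_mono_r.
Qed.

End Gen.

Lemma castHH' {Q : Quantaloid} {a a' a'' b b' b'' : qob Q} (p : a = a') (q : b = b') (p' : a' = a'') (q' : b' = b'') f :
  castH p' q' (castH p q f) = castH (eq_trans p p') (eq_trans q q') f.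
Proof. exact: castHH. Qed.

Section PartA.
Context {Q : Quantaloid} {E D : QCat Q} (Phi : QDist E D) {C : QCat Q}
  (F : QFun E C) (G : QFun D C).
Hypothesis h1 : forall (X : cobj E) (Y : cobj D),
        castH (fext F X) (fext G Y) (chom C (fobj F X) (fobj G Y)) = dmap Phi X Y.
Hypothesis hd : dense F.
Hypothesis hc : codense G.

Definition cF X W : qhom Q (cext E X) (cext C W) := castH (fext F X) eq_refl (chom C (fobj F X) W).
Definition cG W Y : qhom Q (cext C W) (cext D Y) := castH eq_refl (fext G Y) (chom C W (fobj G Y)).

Lemma Phi_cF X Y : dmap Phi X Y = castH eq_refl (fext G Y) (cF X (fobj G Y)).
Proof. by rewrite -h1 /cF castHH'; apply: castH_irr. Qed.
Lemma Phi_cG X Y : dmap Phi X Y = castH (fext F X) eq_refl (cG (fobj F X) Y).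
Proof. by rewrite -h1 /cG castHH'; apply: castH_irr. Qed.

Lemma cF_post X W W' : qle (qcomp (chom C W W') (cF X W)) (cF X W').
Proof. rewrite /cF -castH_comp_l; apply: castH_le; apply: chom_comp. Qed.
Lemma cF_pre X X' W : qle (qcomp (cF X W) (chom E X' X)) (cF X' W).
Proof.
apply: qle_trans (comp_mono_l _ (fhom _ _ F X' X)) _.
rewrite /cF -(castH_comp (fext F X') (fext F X) eq_refl); apply: castH_le; apply: chom_comp.
Qed.
Lemma cG_pre W W' Y : qle (qcomp (cG W Y) (chom C W' W)) (cG W' Y).
Proof. rewrite /cG -castH_comp_r; apply: castH_le; apply: chom_comp. Qed.
Lemma cG_post W Y Y' : qle (qcomp (chom D Y Y') (cG W Y)) (cG W Y').
Proof.
apply: qle_trans (comp_mono_r _ (fhom _ _ G Y Y')) _.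
rewrite /cG -(castH_comp eq_refl (fext G Y) (fext G Y')); apply: castH_le; apply: chom_comp.
Qed.

Lemma wcolim_rep phi Z' : is_wcolim F phi Z' ->
  forall W, chom C Z' W = qinfI (fun X => lres (cF X W) (cF X Z')).
Proof.
case: phi => T [phv php] [p hp]; change (cext C Z' = T) in p; subst T; rewrite /= in hp.
have cl : forall X, qle (phv X) (cF X Z').
  move=> X; move: (chom_id _ C Z'); rewrite hp => /qinfI_spec/(_ X)/lres_spec.
  by rewrite qcomp_id_l.
move=> W; apply: qle_antisym.
- apply/qinfI_spec => X; apply/lres_spec; exact: cF_post.
- rewrite hp; apply: qinfI_mono => X; apply: lres_anti; exact: cl.
Qed.

Lemma dense_rep Z W : chom C Z W = qinfI (fun X => lres (cF X W) (cF X Z)).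
Proof.
case: (hd Z) => phi [Z' [hw hi]].
have [q _] := hi.
have [ha hb] := @iso_hom _ _ _ _ q hi.
rewrite (ha W) (wcolim_rep _ _ hw W) castH_qinfI; apply: qinfI_ext => X.
rewrite (castH_lres eq_refl (eq_sym q) eq_refl); congr lres.
by rewrite /cF (hb (fobj F X)) !castHH'; apply: castH_irr.
Qed.

Lemma wlim_rep psi Z' : is_wlim G psi Z' ->
  forall W, chom C W Z' = qinfI (fun Y => rres (cG Z' Y) (cG W Y)).
Proof.
case: psi => T [psv psp] [p hp]; change (cext C Z' = T) in p; subst T; rewrite /= in hp.
have cl : forall Y, qle (psv Y) (cG Z' Y).
  move=> Y; move: (chom_id _ C Z'); rewrite hp => /qinfI_spec/(_ Y)/rres_spec.
  by rewrite qcomp_id_r.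
move=> W; apply: qle_antisym.
- apply/qinfI_spec => Y; apply/rres_spec; exact: cG_pre.
- rewrite hp; apply: qinfI_mono => Y; apply: rres_anti; exact: cl.
Qed.

Lemma codense_rep W Z : chom C W Z = qinfI (fun Y => rres (cG Z Y) (cG W Y)).
Proof.
case: (hc Z) => psi [Z' [hw hi]].
have [q _] := hi.
have [ha hb] := @iso_hom _ _ _ _ q hi.
rewrite (hb W) (wlim_rep _ _ hw W) castH_qinfI; apply: qinfI_ext => Y.
rewrite (castH_rres eq_refl (eq_sym q) eq_refl); congr rres.
by rewrite /cG (ha (fobj G Y)) !castHH'; apply: castH_irr.
Qed.

Lemma up_eq Z Y : dist_up Phi (fun X => cF X Z) Y = cG Z Y.
Proof.
rewrite /dist_up /cG (dense_rep Z (fobj G Y)) castH_qinfI; apply: qinfI_ext => X.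
by rewrite (Phi_cF X Y) (castH_lres eq_refl eq_refl (fext G Y)).
Qed.

Lemma down_eq Z X : dist_down Phi (dist_up Phi (fun X => cF X Z)) X = cF X Z.
Proof.
rewrite /dist_down {2}/cF (codense_rep (fobj F X) Z) castH_qinfI; apply: qinfI_ext => Y.
by rewrite up_eq (Phi_cG X Y) (castH_rres (fext F X) eq_refl eq_refl).
Qed.

Lemma hpre Z : is_presheaf E (fun X => cF X Z).
Proof. move=> X X'; exact: cF_pre. Qed.

Definition hP Z : PObj E := existT _ (cext C Z) (exist _ (fun X => cF X Z) (hpre Z)).
Definition hI Z : cobj (Isbell Phi) := exist _ (hP Z) (down_eq Z).

Lemma hI_ff Z W : chom (Isbell Phi) (hI Z) (hI W) = chom C Z W.
Proof. by rewrite dense_rep. Qed.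

Definition Hf : QFun C (Isbell Phi).
Proof.
refine (@Build_QFun Q C (Isbell Phi) hI (fun Z => eq_refl) _).
move=> Z W; change (qle (chom C Z W) (chom (Isbell Phi) (hI Z) (hI W))); rewrite hI_ff; exact: qle_refl.
Defined.

Hypothesis htot : total C.

Lemma Hf_ess : ess_surjective Hf.
Proof.
case: htot => L hL.
case=> [[T [phv php]] hcl].
set psi := dist_up Phi phv.
pose kap W : qhom Q (cext C W) T := qinfI (fun Y => rres (psi Y) (cG W Y)).
have kapr : forall W Y, qle (qcomp (psi Y) (kap W)) (cG W Y).
  move=> W Y; apply/rres_spec; exact: qinfI_lb.
have kpre : is_presheaf C kap.
  move=> W W'; apply/qinfI_spec => Y; apply/rres_spec; rewrite qcomp_assoc.
  apply: qle_trans (comp_mono_r _ (kapr W Y)) _; exact: cG_pre.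
pose kP : PObj C := existT _ T (exist _ kap kpre).
pose Z := fobj L kP.
pose e : cext C Z = T := fext L kP.
have hLV : forall V, castH e eq_refl (chom C Z V) = qinfI (fun W => lres (chom C W V) (kap W)).
  move=> V; exact: (hL kP V).
have claim1 : forall W, castH eq_refl e (chom C W Z) = kap W.
{ move=> W; apply: qle_antisym.
  - apply/qinfI_spec => Y; apply/rres_spec.
    have hpsi : qle (psi Y) (castH e (fext G Y) (chom C Z (fobj G Y))).
      rewrite -(castH_irr (eq_trans e eq_refl) _ (eq_trans eq_refl (fext G Y))) -castHH' hLV castH_qinfI.
      apply/qinfI_spec => W'; rewrite (castH_lres eq_refl eq_refl (fext G Y)); apply/lres_spec.
      exact: kapr.
    apply: qle_trans (comp_mono_r _ hpsi) _.
    rewrite -(castH_comp eq_refl e (fext G Y)); apply: castH_le; exact: chom_comp.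
  - have := chom_id _ C Z => /(castH_le e e); rewrite castH_id.
    rewrite -(castH_irr (eq_trans e eq_refl) _ (eq_trans eq_refl e)) -castHH' hLV castH_qinfI.
    move=> /qinfI_spec/(_ W); rewrite (castH_lres eq_refl eq_refl e) => /lres_spec.
    by rewrite qcomp_id_l. }
have claim2 : forall X, castH eq_refl e (cF X Z) = phv X.
  move=> X; rewrite -[phv X](hcl X) /dist_down.
  transitivity (castH (fext F X) eq_refl (castH eq_refl e (chom C (fobj F X) Z))).
    by rewrite /cF !castHH'; apply: castH_irr.
  rewrite claim1 castH_qinfI; apply: qinfI_ext => Y.
  by rewrite (Phi_cG X Y) (castH_rres (fext F X) eq_refl eq_refl).
exists Z; exists e; split.
- apply/qinfI_spec => X; apply/lres_spec; rewrite cid_l /=; move: (claim2 X) => /= ->; exact: qle_refl.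
- apply/qinfI_spec => X; apply/lres_spec; rewrite cid_l'; change (qle (castH eq_refl (eq_sym e) (phv X)) (cF X Z)); rewrite -(claim2 X) castHH' castH_refl.
  exact: qle_refl.
Qed.

Lemma partA : exists H : QFun C (Isbell Phi), qequivalence H.
Proof.
exists Hf; split; last exact: Hf_ess.
move=> Z W; exact: hI_ff.
Qed.

End PartA.

Section PE.
Context {Q : Quantaloid} {E D : QCat Q} (Phi : QDist E D).

Lemma qiso_refl (K : QCat Q) (A : cobj K) : qiso K A A.
Proof. exists eq_refl; split; exact: chom_id. Qed.

Lemma phom_app (p q : PObj E) X : qle (qcomp (phom p q) (pval p X)) (pval q X).
Proof. apply/lres_spec; exact: (qinfI_lb (fun X => lres (pval q X) (pval p X)) X). Qed.

Lemma Phi_pre X X' Y : qle (qcomp (dmap Phi X Y) (chom E X' X)) (dmap Phi X' Y).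
Proof.
apply: qle_trans (dmap_ax _ _ Phi X X' Y Y).
rewrite -{1}(qcomp_id_l (qcomp _ _)); apply: comp_mono_r; exact: chom_id.
Qed.

Lemma Phi_post X Y Y' : qle (qcomp (chom D Y Y') (dmap Phi X Y)) (dmap Phi X Y').
Proof.
apply: qle_trans (dmap_ax _ _ Phi X X Y Y').
apply: comp_mono_l; rewrite -{1}(qcomp_id_r (dmap Phi X Y)); apply: comp_mono_l; exact: chom_id.
Qed.

Lemma down_pre {T : qob Q} (psi : forall Y : cobj D, qhom Q T (cext D Y)) :
  is_presheaf E (dist_down Phi psi).
Proof.
move=> X X'; apply/qinfI_spec => Y; apply/rres_spec; rewrite qcomp_assoc.
apply: qle_trans (comp_mono_r _ _) (Phi_pre X X' Y).
apply/rres_spec; exact: (qinfI_lb (fun Y => rres (psi Y) (dmap Phi X Y)) Y).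
Qed.

Lemma up_copre {T : qob Q} (phi : forall X : cobj E, qhom Q (cext E X) T) :
  is_copresheaf D (dist_up Phi phi).
Proof.
move=> Y Y'; apply/qinfI_spec => X; apply/lres_spec; rewrite -qcomp_assoc.
apply: qle_trans (comp_mono_l _ _) (Phi_post X Y Y').
apply/lres_spec; exact: (qinfI_lb (fun X => lres (dmap Phi X Y) (phi X)) X).
Qed.

Lemma le_cl {T : qob Q} (phi : forall X : cobj E, qhom Q (cext E X) T) X :
  qle (phi X) (dist_down Phi (dist_up Phi phi) X).
Proof.
apply/qinfI_spec => Y; apply/rres_spec; apply/lres_spec.
exact: (qinfI_lb (fun X => lres (dmap Phi X Y) (phi X)) X).
Qed.

Lemma up_down_ge {T : qob Q} (psi : forall Y : cobj D, qhom Q T (cext D Y)) Y :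
  qle (psi Y) (dist_up Phi (dist_down Phi psi) Y).
Proof.
apply/qinfI_spec => X; apply/lres_spec; apply/rres_spec.
exact: (qinfI_lb (fun Y => rres (psi Y) (dmap Phi X Y)) Y).
Qed.

Lemma up_anti {T : qob Q} (phi phi' : forall X : cobj E, qhom Q (cext E X) T) Y :
  (forall X, qle (phi X) (phi' X)) -> qle (dist_up Phi phi' Y) (dist_up Phi phi Y).
Proof. move=> H; apply: qinfI_mono => X; exact: lres_anti. Qed.

Lemma cl_idem {T : qob Q} (phi : forall X : cobj E, qhom Q (cext E X) T) X :
  dist_down Phi (dist_up Phi (dist_down Phi (dist_up Phi phi))) X
  = dist_down Phi (dist_up Phi phi) X.
Proof.
rewrite /dist_down; apply: qinfI_ext => Y; congr rres.
apply: qle_antisym.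
- apply: up_anti => X'; exact: le_cl.
- exact: up_down_ge.
Qed.

Definition clP (p : PObj E) : PObj E :=
  existT _ (pext p) (exist _ (dist_down Phi (dist_up Phi (pval p))) (down_pre _)).

Definition clI (p : PObj E) : cobj (Isbell Phi) :=
  exist _ (clP p) (cl_idem (pval p)).

Lemma phom_cl (p r : PObj E) :
  (forall X, dist_down Phi (dist_up Phi (pval r)) X = pval r X) ->
  phom (clP p) r = phom p r.
Proof.
move=> hr; apply: qle_antisym.
- apply: qinfI_mono => X; apply: lres_anti; exact: le_cl.
- apply/qinfI_spec => X; apply/lres_spec; rewrite -(hr X).
  apply/qinfI_spec => Y; apply/rres_spec; rewrite qcomp_assoc.
  have h : qle (qcomp (dist_up Phi (pval r) Y) (phom p r)) (dist_up Phi (pval p) Y).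
    apply/qinfI_spec => X'; apply/lres_spec; rewrite -qcomp_assoc.
    apply: qle_trans (comp_mono_l _ (phom_app p r X')) _.
    apply/lres_spec; exact: (qinfI_lb (fun X => lres (dmap Phi X Y) (pval r X)) X').
  apply: qle_trans (comp_mono_r _ h) _.
  apply/rres_spec; exact: (qinfI_lb (fun Y => rres (dist_up Phi (pval p) Y) (dmap Phi X Y)) Y).
Qed.

Lemma yoneda_E X (r : PObj E) : phom (yon_obj E X) r = pval r X.
Proof.
apply: qle_antisym.
- apply: (qle_trans _ (phom_app (yon_obj E X) r X)).
  rewrite -{1}(qcomp_id_r (phom _ _)); apply: comp_mono_l; exact: chom_id.
- apply/qinfI_spec => X'; apply/lres_spec; exact: (proj2_sig (projT2 r)).
Qed.

Lemma PhiP_pre Y : is_presheaf E (fun X => dmap Phi X Y).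
Proof. move=> X X'; exact: Phi_pre. Qed.

Definition PhiP Y : PObj E := existT _ (cext D Y) (exist _ (fun X => dmap Phi X Y) (PhiP_pre Y)).

Lemma PhiP_closed Y X : dist_down Phi (dist_up Phi (pval (PhiP Y))) X = pval (PhiP Y) X.
Proof.
apply: qle_antisym; last exact: le_cl.
apply: qle_trans (qinfI_lb _ Y) _.
rewrite /=; apply: qle_trans (rres_anti (qid _) _ _ _) _.
- apply/qinfI_spec => X'; apply/lres_spec; rewrite qcomp_id_l; exact: qle_refl.
- rewrite -[rres _ _]qcomp_id_l; exact: rres_comp.
Qed.

Definition PhiI Y : cobj (Isbell Phi) := exist _ (PhiP Y) (PhiP_closed Y).

Lemma exch {s t : qob Q} (a : forall X : cobj E, qhom Q (cext E X) s)
  (u : forall Y : cobj D, qhom Q t (cext D Y)) :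
  qinfI (fun X => lres (qinfI (fun Y => rres (u Y) (dmap Phi X Y))) (a X))
  = qinfI (fun Y => rres (u Y) (qinfI (fun X => lres (dmap Phi X Y) (a X)))).
Proof.
apply: eq_by_lower => z; split => H.
- apply/qinfI_spec => Y; apply/rres_spec; apply/qinfI_spec => X; apply/lres_spec.
  move: H => /qinfI_spec/(_ X)/lres_spec/qinfI_spec/(_ Y)/rres_spec.
  by rewrite qcomp_assoc.
- apply/qinfI_spec => X; apply/lres_spec; apply/qinfI_spec => Y; apply/rres_spec.
  move: H => /qinfI_spec/(_ Y)/rres_spec/qinfI_spec/(_ X)/lres_spec.
  by rewrite qcomp_assoc.
Qed.

End PE.

Section PartB.
Context {Q : Quantaloid} {E D : QCat Q} (Phi : QDist E D) {C : QCat Q}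
  (H : QFun C (Isbell Phi)) (hff : fully_faithful H) (hes : ess_surjective H).

Notation hH Z := (proj1_sig (fobj H Z)).

Lemma hcl Z X : dist_down Phi (dist_up Phi (pval (hH Z))) X = pval (hH Z) X.
Proof. exact: (proj2_sig (fobj H Z) X). Qed.

Lemma Hrep2 {Z Z'} {P P' : cobj (Isbell Phi)}
  (i : qiso (Isbell Phi) (fobj H Z) P) (i' : qiso (Isbell Phi) (fobj H Z') P')
  (e : cext C Z = pext (proj1_sig P)) (e' : cext C Z' = pext (proj1_sig P')) :
  chom C Z Z' = castH (eq_sym e) (eq_sym e') (phom (proj1_sig P) (proj1_sig P')).
Proof.
rewrite -hff.
have [ha _] := @iso_hom _ (Isbell Phi) _ _ (eq_trans (fext H Z) e) i.
have [_ hb] := @iso_hom _ (Isbell Phi) _ _ (eq_trans (fext H Z') e') i'.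
rewrite ha hb !castHH'; apply: castH_irr.
Qed.

Lemma Hrep1 {Z} W {P : cobj (Isbell Phi)} (i : qiso (Isbell Phi) (fobj H Z) P)
  (e : cext C Z = pext (proj1_sig P)) :
  chom C Z W = castH (eq_sym e) (fext H W) (phom (proj1_sig P) (hH W)).
Proof.
rewrite (Hrep2 i (qiso_refl _ (fobj H W)) e (eq_sym (fext H W))); apply: castH_irr.
Qed.

Lemma Hrep1' W {Z} {P : cobj (Isbell Phi)} (i : qiso (Isbell Phi) (fobj H Z) P)
  (e : cext C Z = pext (proj1_sig P)) :
  chom C W Z = castH (fext H W) (eq_sym e) (phom (hH W) (proj1_sig P)).
Proof.
rewrite (Hrep2 (qiso_refl _ (fobj H W)) i (eq_sym (fext H W)) e); apply: castH_irr.
Qed.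

Definition pick (P : cobj (Isbell Phi)) : cobj C :=
  proj1_sig (constructive_indefinite_description _ (hes P)).
Lemma pick_iso P : qiso (Isbell Phi) (fobj H (pick P)) P.
Proof. exact: (proj2_sig (constructive_indefinite_description _ (hes P))). Qed.
Lemma pick_ext P : cext C (pick P) = pext (proj1_sig P).
Proof. case: (pick_iso P) => p _; exact: (eq_trans (eq_sym (fext H _)) p). Qed.

Definition chiv (ps : PObj C) (X : cobj E) : qhom Q (cext E X) (pext ps) :=
  qsup (fun h => exists W, h = qcomp (pval ps W)
         (castH eq_refl (fext H W) (pval (hH W) X))).

Lemma chi_pre ps : is_presheaf E (chiv ps).
Proof.
move=> X X'; rewrite /chiv qcomp_sup_r; apply: qsup_least => h [g [[W ->] ->]].
rewrite -qcomp_assoc -castH_comp_r.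
apply: qle_trans (comp_mono_l _ (castH_le eq_refl (fext H W) _ _ (proj2_sig (projT2 (hH W)) X X'))) _.
apply: qsup_ub; exists W; reflexivity.
Qed.

Definition chiP ps : PObj E := existT _ (pext ps) (exist _ (chiv ps) (chi_pre ps)).
Definition Lo ps := pick (clI Phi (chiP ps)).
Lemma Lext ps : cext C (Lo ps) = pext ps.
Proof. exact: pick_ext. Qed.

Lemma chi_hom ps (r : PObj E) b (q : pext r = b) :
  castH eq_refl q (phom (chiP ps) r)
  = qinfI (fun W => lres (castH (fext H W) q (phom (hH W) r)) (pval ps W)).
Proof.
case: b / q.
apply: eq_by_lower => z; split => H0.
- apply/qinfI_spec => W; apply/lres_spec.
  rewrite /phom castH_qinfI; apply/qinfI_spec => X.
  rewrite (castH_lres eq_refl (fext H W) eq_refl); apply/lres_spec.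
  move: H0 => /qinfI_spec/(_ X)/lres_spec H0.
  rewrite -qcomp_assoc; apply: qle_trans (comp_mono_l z (qsup_ub (ex_intro _ W eq_refl))) H0.
- apply/qinfI_spec => X; apply/lres_spec.
  rewrite /= /chiv qcomp_sup_l; apply: qsup_least => h [f [[W ->] ->]].
  rewrite qcomp_assoc.
  move: H0 => /qinfI_spec/(_ W)/lres_spec H0.
  apply: qle_trans (comp_mono_r _ H0) _.
  rewrite -(castH_comp eq_refl (fext H W) eq_refl); exact: phom_app.
Qed.

Lemma L_adj ps Y : castH (Lext ps) eq_refl (chom C (Lo ps) Y)
  = qinfI (fun W => lres (chom C W Y) (pval ps W)).
Proof.
rewrite (Hrep1 Y (pick_iso _) (Lext ps)) (phom_cl _ _ _ (hcl Y)) castHH'.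
transitivity (castH eq_refl (fext H Y) (phom (chiP ps) (hH Y))); first exact: castH_irr.
rewrite chi_hom; apply: qinfI_ext => W; by rewrite hff.
Qed.

Lemma L_unit ps W : qle (pval ps W) (castH eq_refl (Lext ps) (chom C W (Lo ps))).
Proof.
have := chom_id _ C (Lo ps) => /(castH_le (Lext ps) (Lext ps)).
rewrite castH_id -(castH_irr (eq_trans (Lext ps) eq_refl) _ (eq_trans eq_refl (Lext ps))) -castHH' L_adj castH_qinfI.
move=> /qinfI_spec/(_ W); rewrite (castH_lres eq_refl eq_refl (Lext ps)) => /lres_spec.
by rewrite qcomp_id_l.
Qed.

Definition Lf : QFun (PCat C) C.
Proof.
refine (@Build_QFun Q (PCat C) C Lo Lext _).
move=> ps ps'.
rewrite -(castH_irr (eq_trans (Lext ps) eq_refl) _ (eq_trans eq_refl (Lext ps'))) -castHH' L_adj castH_qinfI.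
apply/qinfI_spec => W; rewrite (castH_lres eq_refl eq_refl (Lext ps')); apply/lres_spec.
exact: qle_trans (phom_app _ _ _) (L_unit ps' W).
Defined.

Lemma totalC : total C.
Proof. exists Lf => ps Y; exact: L_adj. Qed.

Definition Fo (X : cobj E) : cobj C := pick (clI Phi (yon_obj E X)).
Lemma Fext X : cext C (Fo X) = cext E X.
Proof. exact: pick_ext. Qed.

Lemma FW X W : castH (Fext X) eq_refl (chom C (Fo X) W)
  = castH eq_refl (fext H W) (pval (hH W) X).
Proof.
rewrite (Hrep1 W (pick_iso _) (Fext X)) (phom_cl _ _ _ (hcl W)) yoneda_E castHH'.
exact: castH_irr.
Qed.

Definition Ff : QFun E C.
Proof.
refine (@Build_QFun Q E C Fo Fext _).
move=> X X'.
rewrite (Hrep2 (pick_iso _) (pick_iso _) (Fext X) (Fext X')) castHH' castH_refl.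
rewrite (phom_cl Phi (yon_obj E X) (clP Phi (yon_obj E X')) (cl_idem Phi (pval (yon_obj E X')))) yoneda_E.
exact: (le_cl Phi (fun X0 => chom E X0 X') X).
Defined.

Definition Go (Y : cobj D) : cobj C := pick (PhiI Phi Y).
Lemma Gext Y : cext C (Go Y) = cext D Y.
Proof. exact: pick_ext. Qed.

Definition Gf : QFun D C.
Proof.
refine (@Build_QFun Q D C Go Gext _).
move=> Y Y'.
rewrite (Hrep2 (pick_iso _) (pick_iso _) (Gext Y) (Gext Y')) castHH' castH_refl.
apply/qinfI_spec => X; apply/lres_spec; exact: Phi_post.
Defined.

Lemma FG1 X Y : castH (fext Ff X) (fext Gf Y) (chom C (fobj Ff X) (fobj Gf Y)) = dmap Phi X Y.
Proof.
rewrite /= (Hrep2 (pick_iso _) (pick_iso _) (Fext X) (Gext Y)) castHH' castH_refl.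
rewrite (phom_cl _ _ _ (PhiP_closed Phi Y)) yoneda_E; reflexivity.
Qed.

Lemma Ff_dense : dense Ff.
Proof.
move=> Z; exists (hH Z), Z; split; last exact: qiso_refl.
exists (eq_sym (fext H Z)) => W.
rewrite -(hff Z W) castHH'.
transitivity (castH eq_refl (fext H W) (phom (hH Z) (hH W))); first exact: castH_irr.
rewrite castH_qinfI; apply: qinfI_ext => X.
rewrite (castH_lres eq_refl eq_refl (fext H W)); congr lres.
symmetry; exact: FW.
Qed.

Lemma GW W Y : castH eq_refl (Gext Y) (chom C W (Go Y))
  = castH (fext H W) eq_refl (phom (hH W) (PhiP Phi Y)).
Proof. rewrite (Hrep1' W (pick_iso _) (Gext Y)) castHH'; exact: castH_irr. Qed.

Lemma Gf_codense : codense Gf.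
Proof.
move=> Z.
exists (existT _ (pext (hH Z)) (exist _ (dist_up Phi (pval (hH Z))) (up_copre Phi _))), Z.
split; last exact: qiso_refl.
exists (eq_sym (fext H Z)) => W.
rewrite -(hff W Z) castHH'.
transitivity (castH (fext H W) eq_refl (phom (hH W) (hH Z))); first exact: castH_irr.
have -> : qinfI (fun Y => rres (cpval (existT _ (pext (hH Z)) (exist _ (dist_up Phi (pval (hH Z))) (up_copre Phi _))) Y)
            (castH eq_refl (fext Gf Y) (chom C W (fobj Gf Y))))
   = castH (fext H W) eq_refl (qinfI (fun Y => rres (dist_up Phi (pval (hH Z)) Y) (phom (hH W) (PhiP Phi Y)))).
  rewrite castH_qinfI; apply: qinfI_ext => Y.
  by rewrite GW (castH_rres (fext H W) eq_refl eq_refl).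
congr castH.
transitivity (qinfI (fun X => lres (qinfI (fun Y => rres (dist_up Phi (pval (hH Z)) Y) (dmap Phi X Y))) (pval (hH W) X))).
  rewrite /phom; apply: qinfI_ext => X; by rewrite -{1}(hcl Z X).
exact: exch.
Qed.

End PartB.

Theorem theorem9p1 (Q : Quantaloid) (E D : QCat Q) (Phi : QDist E D) (C : QCat Q) :
  (exists H : QFun C (Isbell Phi), qequivalence H)
  <->
  (total C /\
   exists (F : QFun E C) (G : QFun D C),
     (forall (X : cobj E) (Y : cobj D),
        castH (fext F X) (fext G Y) (chom C (fobj F X) (fobj G Y)) = dmap Phi X Y)
     /\ dense F /\ codense G).
Proof.
split.
- case=> H [hff hes]; split; first exact: (totalC Phi H hff hes).
  exists (Ff Phi H hff hes), (Gf Phi H hff hes); split; first exact: FG1.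
  split; [exact: Ff_dense | exact: Gf_codense].
- case=> htot [F [G [h1 [hd hc]]]]; exact: (partA Phi F G h1 hd hc htot).
Qed.
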